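(* Let $\mathbb{K}$ be a field, let $P_1, P_2 \in \mathbb{K}[X]$ be irreducible, and let $f : \mathbb{K}[X]/(P_1) \to \mathbb{K}[X]/(P_2)$ be a ring isomorphism stabilizing $\mathbb{K}$. Then $S_f$ is coprime to $P_2$ if and only if $Q_f' \neq 0$.
   Context: A ring homomorphism $f : A \to B$ between $\mathbb{K}$-algebras stabilizes $\mathbb{K}$ if there is a field automorphism $\sigma_f$ of $\mathbb{K}$ with $f(a) = \sigma_f(a)$ for all $a \in \mathbb{K}$. For a field automorphism $\sigma$ of $\mathbb{K}$, $\sigma^X$ is the ring automorphism of $\mathbb{K}[X]$ applying $\sigma$ to coefficients; $A\circ Q$ denotes $A(Q(X))$; $'$ denotes the formal derivative. For a ring isomorphism $f : \mathbb{K}[X]/(P_1) \to \mathbb{K}[X]/(P_2)$ stabilizing $\mathbb{K}$: $Q_f$ is the unique polynomial of degree $< \deg P_2$ such that $f$ sends the class of $X$ to the class of $Q_f$, and $S_f \in \mathbb{K}[X]$ is the polynomial with $\sigma_f^X(P_1)\circ Q_f = S_f P_2$ (it exists because $\sigma_f^X(P_1)\circ Q_f$ is divisible by $P_2$). *)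

(* Defs.v *)
From HB Require Import structures.
From mathcomp Require Import all_boot all_order all_algebra.
Set Implicit Arguments. Unset Strict Implicit. Unset Printing Implicit Defensive.
Import GRing.Theory.
Local Open Scope ring_scope.

(* MathComp's quotient ring {poly %/ h} (qpoly.v) is K[X]/(h) only for h monic
   of size > 1; since (P) = (c P) for c a nonzero constant, K[X]/(P) is
   modelled as {poly %/ monicize P}, with monicize P = (lead_coef P)^-1 *: P. *)
Definition monicize (K : fieldType) (P : {poly K}) : {poly K} :=
  (lead_coef P)^-1 *: P.

Notation quotK P := {poly %/ monicize P}.

Definition stabilizes_via (K : fieldType) (P1 P2 : {poly K})
  (f : quotK P1 -> quotK P2) (sigma : K -> K) : Prop :=
  forall a : K, f (qpolyC (monicize P1) a) = qpolyC (monicize P2) (sigma a).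

(* Q_f : the representative of degree < deg P2 of f (class of X). Elements of
   {poly %/ h} are exactly the polynomials of size < size h (= size P2). *)
Definition Qf (K : fieldType) (P1 P2 : {poly K}) (f : quotK P1 -> quotK P2)
  : {poly K} := polyn (f (qpolyX (monicize P1))).

(* S_f : the polynomial with  sigma^X(P1) o Q_f = S_f * P2  (exact quotient). *)
Definition Sf (K : fieldType) (P1 P2 : {poly K}) (f : quotK P1 -> quotK P2)
  (sigma : K -> K) : {poly K} :=
  (map_poly sigma P1 \Po Qf f) %/ P2.

(* Main.v *)
Require Import Defs.
From HB Require Import structures.
From mathcomp Require Import all_boot all_order all_algebra.
From mathcomp Require Import ring.
Import GRing.Theory.
Local Open Scope ring_scope.

Section H.
Variable K : fieldType.

Lemma in_qpoly_eq0 (h A : {poly K}) : (in_qpoly h A == 0) = (mk_monic h %| A).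
Proof.
rewrite -val_eqE /= -(Pdiv.IdomainMonic.modpE (monic_mk_monic h) A).
by rewrite /dvdp.
Qed.

Lemma in_qpoly_val (h : {poly K}) (y : {poly %/ h}) : in_qpoly h (polyn y) = y.
Proof. by apply: val_inj; rewrite /= Pdiv.CommonRing.rmodp_small // size_mk_monic. Qed.

Lemma in_qpolyCK (h : {poly K}) c : in_qpoly h c%:P = qpolyC h c.
Proof.
apply: val_inj; rewrite /= Pdiv.CommonRing.rmodp_small //.
apply: leq_ltn_trans (size_mk_monic_gt1 h); exact: size_polyC_leq1.
Qed.

Lemma hom (h1 h2 : {poly K}) (f : {rmorphism {poly %/ h1} -> {poly %/ h2}})
  (sigma : {rmorphism K -> K})
  (hstab : forall a, f (qpolyC h1 a) = qpolyC h2 (sigma a)) (A : {poly K}) :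
  f (in_qpoly h1 A) = in_qpoly h2 (map_poly sigma A \Po polyn (f (qpolyX h1))).
Proof.
elim/poly_ind: A => [|A c IH]; first by rewrite raddf0 map_poly0 comp_poly0 !raddf0.
rewrite rmorphD rmorphM /= rmorphD rmorphM /= in_qpolyCK hstab IH.
rewrite rmorphD rmorphM /= map_polyX map_polyC /= comp_polyD comp_polyM comp_polyX comp_polyC.
by rewrite rmorphD rmorphM /= in_qpolyCK in_qpoly_val.
Qed.

Lemma dvdp_comp_sub (A B C : {poly K}) : (B - C) %| ((A \Po B) - (A \Po C)).
Proof.
elim/poly_ind: A => [|A c IH]; first by rewrite !comp_poly0 subrr dvdp0.
rewrite !comp_polyD !comp_polyM !comp_polyX !comp_polyC.
have -> : (A \Po B) * B + c%:P - ((A \Po C) * C + c%:P)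
   = ((A \Po B) - (A \Po C)) * B + (A \Po C) * (B - C) by ring.
by apply: dvdp_add; [apply: dvdp_mulr | apply: dvdp_mull; apply: dvdpp].
Qed.

Lemma taylor2 (A H : {poly K}) :
  exists W, A \Po ('X + H) = A + H * A^`() + H ^+ 2 * W.
Proof.
elim/poly_ind: A => [|A c [W IH]]; first by exists 0; rewrite comp_poly0 deriv0; ring.
exists (A^`() + W * ('X + H)).
rewrite derivMXaddC comp_polyD comp_polyM comp_polyX comp_polyC IH; ring.
Qed.
Lemma P_neq0 {P : {poly K}} : (1 < size P)%N -> P != 0.
Proof. by move=> h; rewrite -size_poly_gt0 (ltnW h). Qed.

Lemma monicize_eqp {P : {poly K}} : (1 < size P)%N -> monicize P %= P.
Proof.
move=> h; apply: eqp_scale; rewrite invr_eq0 lead_coef_eq0; exact: P_neq0.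
Qed.

Lemma mk_monicize {P : {poly K}} : (1 < size P)%N -> mk_monic (monicize P) = monicize P.
Proof.
move=> h; have P0 := P_neq0 h.
have l0 : (lead_coef P)^-1 != 0 by rewrite invr_eq0 lead_coef_eq0.
rewrite /mk_monic /monicize size_scale // h /= monicE lead_coefZ mulVf //.
  by rewrite eqxx. by rewrite lead_coef_eq0.
Qed.

Lemma size_monicize {P : {poly K}} : (1 < size P)%N -> size (monicize P) = size P.
Proof. move=> h; rewrite size_scale // invr_eq0 lead_coef_eq0; exact: P_neq0. Qed.

Lemma qdvd (P A : {poly K}) : (1 < size P)%N ->
  (in_qpoly (monicize P) A == 0) = (P %| A).
Proof.
move=> h; rewrite in_qpoly_eq0 mk_monicize //; apply: eqp_dvdl; exact: monicize_eqp.
Qed.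

Lemma size_qval (P : {poly K}) (y : {poly %/ monicize P}) : (1 < size P)%N ->
  (size (polyn y) < size P)%N.
Proof. by move=> h; rewrite -(size_monicize h) -{2}(mk_monicize h) size_mk_monic. Qed.

Lemma not_dvd1 (P a : {poly K}) : (1 < size P)%N -> 1 + a * P <> 0.
Proof.
move=> h H; have E : 1 = - a * P.
  transitivity (1 + a * P - a * P); first ring.
  by rewrite H; ring.
have : P %| 1 by rewrite E; apply: dvdp_mull; apply: dvdpp.
by rewrite dvdp1; case: (size P) h => [|[|]].
Qed.

Lemma small_dvd (P A : {poly K}) : (size A < size P)%N -> P %| A -> A = 0.
Proof.
move=> h H; apply/eqP; apply/negPn/negP => A0.
by have := dvdp_leq A0 H; rewrite leqNgt h.
Qed.

Lemma dvd_deriv_small (P A : {poly K}) : (size A <= size P)%N -> P %| A^`() -> A^`() = 0.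
Proof.
move=> h H; case: (eqVneq A 0) => [->|A0]; first by rewrite deriv0.
apply: small_dvd H; exact: leq_trans (lt_size_deriv A0) h.
Qed.

End H.

Theorem mainTheorem12 (K : fieldType) (P1 P2 : {poly K})
  (hP1 : irreducible_poly P1) (hP2 : irreducible_poly P2)
  (f : {rmorphism quotK P1 -> quotK P2}) (hf : bijective f)
  (sigma : {rmorphism K -> K}) (hsigma : bijective sigma)
  (hstab : stabilizes_via f sigma) :
  coprimep (Sf f sigma) P2 <-> (Qf f)^`() != 0.
Proof.
have s1 : (1 < size P1)%N := hP1.1.
have s2 : (1 < size P2)%N := hP2.1.
have P10 := @P_neq0 _ _ s1; have P20 := @P_neq0 _ _ s2.
case: hf => g fg gf; case: hsigma => tau st ts.
set Q := Qf f.
set R := polyn (g (qpolyX (monicize P2))).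
have homQ : forall A, in_qpoly (monicize P2) (map_poly sigma A \Po Q)
     = f (in_qpoly (monicize P1) A) by move=> A; rewrite (@hom _ _ _ f sigma hstab).
have key : forall A, (P2 %| map_poly sigma A \Po Q) = (P1 %| A).
  by move=> A; rewrite -!qdvd // homQ raddf_eq0 //; exact: can_inj fg.
have mapK : forall A, map_poly sigma (map_poly tau A) = A.
  move=> A; rewrite -map_poly_comp_id0 ?rmorph0 //.
  by rewrite map_poly_id // => x _ /=; rewrite ts.
have sQ : (size Q < size P2)%N by apply: size_qval.
have sR : (size R < size P1)%N by apply: size_qval.
set P := map_poly sigma P1.
set T := map_poly sigma R.
have hPQ : P2 %| P \Po Q by rewrite key dvdpp.
have hTQ : P2 %| (T \Po Q) - 'X.
  rewrite -qdvd // raddfB /= homQ in_qpoly_val gf subr_eq0; exact/eqP.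
have hRQ : P1 %| (map_poly tau Q \Po R) - 'X.
  rewrite -key rmorphB /= map_comp_poly mapK map_polyX comp_polyB comp_polyX.
  rewrite -comp_polyA; apply: (dvdp_trans hTQ).
  by have := @dvdp_comp_sub _ Q (T \Po Q) 'X; rewrite comp_polyXr.
have hPT : P %| P2 \Po T.
  rewrite -(mapK P2) -map_comp_poly /P dvdp_map -key map_comp_poly mapK.
  rewrite -comp_polyA.
  have := @dvdp_comp_sub _ P2 (T \Po Q) 'X; rewrite comp_polyXr => H.
  have H2 := dvdp_trans hTQ H.
  rewrite -(subrK P2 (P2 \Po (T \Po Q))); apply: dvdp_add => //; exact: dvdpp.
set S := Sf f sigma.
have hS : S * P2 = P \Po Q by apply: divpK.
have Di : (P^`() \Po Q) * Q^`() = S^`() * P2 + S * P2^`().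
  by rewrite -deriv_comp -hS derivM.
set U := ((T \Po Q) - 'X) %/ P2.
have hU : T \Po Q = 'X + U * P2.
  by rewrite /U divpK //; ring.
have Dii : (T^`() \Po Q) * Q^`() = 1 + U^`() * P2 + U * P2^`().
  by rewrite -deriv_comp hU derivD derivX derivM; ring.
set Ug := ((map_poly tau Q \Po R) - 'X) %/ P1.
have hUg : map_poly tau Q \Po R = 'X + Ug * P1.
  by rewrite /Ug divpK //; ring.
have Dg : ((map_poly tau Q)^`() \Po R) * R^`() = 1 + Ug^`() * P1 + Ug * P1^`().
  by rewrite -deriv_comp hUg derivD derivX derivM; ring.
have nP2d : P2^`() != 0 -> coprimep P2 P2^`().
  move=> d0; rewrite irreducible_poly_coprime //; apply/negP => H.
  by move/eqP: d0; apply; apply: dvd_deriv_small H.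
split.
- move=> cop; apply/negP => /eqP Q0.
  have d0 : P2^`() != 0.
    apply/eqP => d0; move: Dii; rewrite Q0 d0 mulr0 mulr0 addr0 => /esym.
    exact: not_dvd1.
  have : P2 %| S^`() * P2 + S * P2^`() by rewrite -Di Q0 mulr0 dvdp0.
  rewrite dvdp_addr; last by apply: dvdp_mull; apply: dvdpp.
  rewrite mulrC.
  rewrite Gauss_dvdpr; last exact: nP2d.
  move=> P2S; move: cop; rewrite coprimep_sym => /(coprimep_dvdl P2S).
  by rewrite coprimepp; case: (size P2) s2 => [|[|]].
- move=> Qd0; rewrite coprimep_sym irreducible_poly_coprime //; apply/negP => P2S.
  have cQ : coprimep P2 Q^`().
    rewrite irreducible_poly_coprime //; apply/negP => H.
    by move/eqP: Qd0; apply; apply: dvd_deriv_small H; exact: ltnW.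
  have P1d : P1^`() = 0.
    have : P2 %| (P^`() \Po Q) * Q^`().
      rewrite Di; apply: dvdp_add; first by apply: dvdp_mull; apply: dvdpp.
      exact: dvdp_mulr.
    rewrite mulrC Gauss_dvdpr // /P deriv_map key.
    by apply: dvd_deriv_small; exact: leqnn.
  set V := (P2 \Po T) %/ P.
  have hV : P2 \Po T = V * P by rewrite /V divpK.
  have [W hW] := @taylor2 _ P2 (U * P2).
  have E1 : ((V \Po Q) * S) * P2 = (1 + U * P2^`() + U ^+ 2 * P2 * W) * P2.
    have : P2 \Po (T \Po Q) = (V \Po Q) * S * P2.
      by rewrite comp_polyA hV comp_polyM -hS mulrA.
    rewrite hU hW => <-; ring.
  have E2 := mulIf P20 E1.
  have : P2 %| (T^`() \Po Q) * Q^`().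
    have -> : (T^`() \Po Q) * Q^`() = (V \Po Q) * S - P2 * (U ^+ 2 * W - U^`()).
      by rewrite Dii E2; ring.
    apply: dvdp_sub; first exact: dvdp_mull.
    by apply: dvdp_mulr; apply: dvdpp.
  rewrite mulrC Gauss_dvdpr // /T deriv_map key => H.
  have R0 : R^`() = 0 by apply: dvd_deriv_small H; exact: ltnW.
  move: Dg; rewrite R0 P1d mulr0 mulr0 addr0 => /esym.
  exact: not_dvd1.
Qed.
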